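(* Let $T_2$ be the tree with vertex set $\{w,x,y,z,u_1,a_1,b_1\}$ and edges $wx,xy,yz,zu_1,u_1a_1,u_1b_1$ (order $n=7$, maximum degree $\Delta=3$). Then $\gamma^{\rm ID}(T_2)=5=\frac23\cdot 7+\frac13 = \left(\frac{\Delta-1}{\Delta}\right)n+\frac13$.
   Context: An identifying code of a graph $G$ is a set $C\subseteq V(G)$ such that every vertex $v$ has $N[v]\cap C\neq\emptyset$ and for all distinct $u,v$, $N[u]\cap C \ne N[v]\cap C$, where $N[v]$ is the closed neighborhood; $\gamma^{\rm ID}(G)$ is its minimum size. *)

(* Defs.v *)
From HB Require Import structures.
From mathcomp Require Import all_boot all_order all_algebra.
Set Implicit Arguments. Unset Strict Implicit. Unset Printing Implicit Defensive.

Section IdCode.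
Variables (T : finType) (e : rel T).

Definition cnbhd (v : T) : {set T} := [set u | (u == v) || e v u].

Definition is_identifying_code (C : {set T}) : Prop :=
  (forall v : T, cnbhd v :&: C != set0) /\
  (forall u v : T, u != v -> cnbhd u :&: C != cnbhd v :&: C).

Definition is_gammaID (k : nat) : Prop :=
  (exists C : {set T}, is_identifying_code C /\ #|C| = k) /\
  (forall C : {set T}, is_identifying_code C -> k <= #|C|).

Definition degree (v : T) : nat := #|[set u | e v u]|.
Definition maxdeg : nat := \max_(v : T) degree v.
End IdCode.

Inductive T2v := w | x | y | z | u1 | a1 | b1.

Definition T2v_code (v : T2v) : 'I_7 :=
  match v with w => inord 0 | x => inord 1 | y => inord 2 | z => inord 3
  | u1 => inord 4 | a1 => inord 5 | b1 => inord 6 end.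
Definition T2v_decode (i : 'I_7) : T2v :=
  match val i with 0 => w | 1 => x | 2 => y | 3 => z | 4 => u1 | 5 => a1 | _ => b1 end.
Lemma T2v_codeK : cancel T2v_code T2v_decode.
Proof. by case; rewrite /T2v_decode /= inordK. Qed.
HB.instance Definition _ := Finite.copy T2v (can_type T2v_codeK).

Definition T2_edge_dir (a b : T2v) : bool :=
  match a, b with
  | w, x | x, y | y, z | z, u1 | u1, a1 | u1, b1 => true
  | _, _ => false end.
Definition T2_adj : rel T2v := fun a b => T2_edge_dir a b || T2_edge_dir b a.

(* Main.v *)
Require Import Defs.
From mathcomp Require Import all_boot all_order all_algebra.
Import GRing.Theory Num.Theory.
Local Open Scope ring_scope.

Definition idf (f : T2v -> bool) : bool :=
  [forall v, [exists t, ((t == v) || T2_adj v t) && f t]] &&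
  [forall u, forall v, (u != v) ==> [exists t, (((t == u) || T2_adj u t) && f t) !=
                                              (((t == v) || T2_adj v t) && f t)]].
Definition idb (C : {set T2v}) : bool := idf (fun t => t \in C).

Lemma idbP C : reflect (is_identifying_code T2_adj C) (idb C).
Proof.
apply: (iffP andP) => [[/forallP H1 /forallP H2]|[H1 H2]]; split.
- move=> v; apply/set0Pn; have /existsP[t Ht] := H1 v; exists t.
  by rewrite inE /cnbhd inE.
- move=> u v uv; have /forallP/(_ v)/implyP/(_ uv)/existsP[t Ht] := H2 u.
  apply/negP => /eqP/setP/(_ t); rewrite /cnbhd !inE => E.
  by move: Ht; rewrite E eqxx.
- apply/forallP => v; have /set0Pn[t] := H1 v; rewrite !inE => Ht.
  by apply/existsP; exists t.
- apply/forallP => u; apply/forallP => v; apply/implyP => uv.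
  have := H2 u v uv; apply: contraNT; rewrite negb_exists => /forallP H.
  apply/eqP/setP => t; have := H t; rewrite negbK => /eqP.
  by rewrite /cnbhd !inE.
Qed.



Definition eqb' (a b : T2v) : bool :=
  match a, b with
  | w, w | x, x | y, y | z, z | u1, u1 | a1, a1 | b1, b1 => true
  | _, _ => false end.

Lemma eqT2 (a b : T2v) : (a == b) = eqb' a b.
Proof.
apply/eqP/idP => [->|]; first by case: b.
by case: a; case: b.
Qed.

Lemma forallE (P : pred T2v) :
  [forall v, P v] = [&& P w, P x, P y, P z, P u1, P a1 & P b1].
Proof.
apply/forallP/idP => [H|]; first by rewrite !H.
by move=> /and5P[? ? ? ? /andP[? /andP[? ?]]] [].
Qed.

Lemma existsE (P : pred T2v) :
  [exists v, P v] = [|| P w, P x, P y, P z, P u1, P a1 | P b1].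
Proof.
apply/existsP/idP => [[[]] ->|]; rewrite ?orbT //.
by case/or4P => [?|?|?|/or4P[?|?|?|?]]; eexists; eassumption.
Qed.

Definition L := [:: w; x; y; z; u1; a1; b1].

Lemma permL : perm_eq (Finite.enum T2v) L.
Proof.
rewrite -enumT; apply: uniq_perm; first exact: enum_uniq.
  by rewrite /= !inE !eqT2.
by move=> v; rewrite mem_enum !inE !eqT2; case: v.
Qed.

Lemma cardL (A : {pred T2v}) : #|A| = count (mem A) L.
Proof. by rewrite cardE /enum_mem size_filter (permP permL). Qed.

Lemma lb_all (f : T2v -> bool) : idf f -> (4 < count f L)%N.
Proof.
rewrite /idf !forallE !existsE /= !eqT2 /T2_adj /=.
by case: (f w); case: (f x); case: (f y); case: (f z); case: (f u1); case: (f a1); case: (f b1).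
Qed.

Definition Cw : {set T2v} := [set x; y; z; u1; a1].

Theorem mainTheorem6 :
  #|{: T2v}| = 7%N /\ maxdeg T2_adj = 3%N /\
  is_gammaID T2_adj 5 /\
  (5%:R : rat) = 2%:R / 3%:R * 7%:R + 1%:R / 3%:R /\
  (5%:R : rat) = ((maxdeg T2_adj)%:R - 1) / (maxdeg T2_adj)%:R * (#|{: T2v}|)%:R + 1 / 3%:R.
Proof.
have c7 : #|{: T2v}| = 7%N by rewrite cardL.
have md : maxdeg T2_adj = 3%N.
  rewrite /maxdeg /degree [index_enum _]unlock (perm_big _ permL).
  by rewrite !big_cons big_nil !cardsE !cardL.
rewrite c7 md; split=> //; split=> //; split; last first.
  by split; apply/eqP; rewrite -subr_eq0; vm_compute.
split.
  exists Cw; split; last by rewrite cardL /Cw /= !inE !eqT2.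
  apply/idbP; rewrite /idb /idf !forallE !existsE /Cw /= !inE !eqT2 /T2_adj.
  by [].
move=> C /idbP H; rewrite cardL; exact: lb_all H.
Qed.
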